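(* Let $A=\{\mathbf{a}_1,\dots,\mathbf{a}_m\}\subset\mathbb{Z}^n$ with $\mathbb{N}A$ an affine semigroup, and let $E_1,E_2$ be nonempty disjoint subsets of $\{1,\dots,m\}$ with $E_1\cup E_2=\{1,\dots,m\}$. Then $\mathbb{N}A$ is the s-gluing of $\mathbb{N}A^{E_1}$ and $\mathbb{N}A^{E_2}$ if and only if $\sigma=\mathrm{pos}_{\mathbb{Q}}(A)$ is the direct sum $\sigma_{E_1}\oplus\sigma_{E_2}$, i.e. if and only if there exists $\mathbf{a}\in\sigma_{E_1}\cap\sigma_{E_2}$ with $\mathrm{span}_{\mathbb{Q}}(\sigma_{E_1})\cap\mathrm{span}_{\mathbb{Q}}(\sigma_{E_2})=\mathbb{Q}\mathbf{a}$.
   Context: $\mathbb{N}A$ is the set of nonnegative integer combinations of $A$; an affine semigroup is a finitely generated subsemigroup $S\subset\mathbb{Z}^n$ with $S\cap(-S)=\{\mathbf0\}$. For $E\subset\{1,\dots,m\}$, $A^E=\{\mathbf{a}_i:i\in E\}$ and $\sigma_E=\mathrm{pos}_{\mathbb{Q}}(A^E)$ (nonnegative rational combinations); note $\sigma=\mathrm{pos}_{\mathbb{Q}}(\sigma_{E_1}\cup\sigma_{E_2})$. $\mathbb{N}A$ is the s-gluing of $\mathbb{N}A^{E_1}$ and $\mathbb{N}A^{E_2}$ if there is an integer vector $\mathbf{a}$ with $\mathbb{Z}\mathbf{a}=\mathbb{Z}A^{E_1}\cap\mathbb{Z}A^{E_2}$ and $t\mathbf{a}\in\mathbb{N}A^{E_1}\cap\mathbb{N}A^{E_2}$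 for some positive integer $t$. *)

(* Defs.v *)
From HB Require Import structures.
From mathcomp Require Import all_boot all_order all_algebra.
Set Implicit Arguments. Unset Strict Implicit. Unset Printing Implicit Defensive.
Import Order.TTheory GRing.Theory Num.Theory.
Local Open Scope ring_scope.

Section AffineDefs.
Variables (m n : nat) (A : 'I_m -> 'rV[int]_n).

Definition AQ (i : 'I_m) : 'rV[rat]_n := map_mx (fun z : int => z%:~R) (A i).

Definition NAset (E : {set 'I_m}) (x : 'rV[int]_n) : Prop :=
  exists c : 'I_m -> nat, x = \sum_(i in E) (c i)%:Z *: A i.

Definition ZAset (E : {set 'I_m}) (x : 'rV[int]_n) : Prop :=
  exists c : 'I_m -> int, x = \sum_(i in E) c i *: A i.

Definition sigmaE (E : {set 'I_m}) (x : 'rV[rat]_n) : Prop :=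
  exists c : 'I_m -> rat, (forall i, 0 <= c i) /\ x = \sum_(i in E) c i *: AQ i.

(* NA is an affine semigroup: NA /\ -NA = {0} (finite generation is automatic) *)
Definition is_affine_semigroup : Prop :=
  forall x, NAset setT x -> NAset setT (- x) -> x = 0.

Definition s_gluing (E1 E2 : {set 'I_m}) : Prop :=
  exists a : 'rV[int]_n,
    (forall x, (exists z : int, x = z *: a) <-> (ZAset E1 x /\ ZAset E2 x)) /\
    (exists t : nat, (0 < t)%N /\ NAset E1 (t%:Z *: a) /\ NAset E2 (t%:Z *: a)).

End AffineDefs.

Definition spanQ (n : nat) (S : 'rV[rat]_n -> Prop) (x : 'rV[rat]_n) : Prop :=
  exists (k : nat) (v : 'I_k -> 'rV[rat]_n) (c : 'I_k -> rat),
    (forall j, S (v j)) /\ x = \sum_(j < k) c j *: v j.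

Definition cone_direct_sum (m n : nat) (A : 'I_m -> 'rV[int]_n)
    (E1 E2 : {set 'I_m}) : Prop :=
  exists a : 'rV[rat]_n,
    sigmaE A E1 a /\ sigmaE A E2 a /\
    (forall x, (spanQ (sigmaE A E1) x /\ spanQ (sigmaE A E2) x)
               <-> exists q : rat, x = q *: a).

(* Main.v *)
Require Import Defs.
From HB Require Import structures.
From mathcomp Require Import all_boot all_order all_algebra.
From Stdlib Require Import Classical.
Set Implicit Arguments. Unset Strict Implicit. Unset Printing Implicit Defensive.
Import Order.TTheory GRing.Theory Num.Theory.
Local Open Scope ring_scope.

Section Helpers.
Variables (m n : nat) (A : 'I_m -> 'rV[int]_n).

Definition phi (v : 'rV[int]_n) : 'rV[rat]_n := map_mx (fun z : int => z%:~R) v.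

Lemma phiD u v : phi (u + v) = phi u + phi v.
Proof. by apply/matrixP=> i j; rewrite !mxE intrD. Qed.
Lemma phi0 : phi 0 = 0.
Proof. by apply/matrixP=> i j; rewrite !mxE. Qed.
Lemma phiZ (z : int) v : phi (z *: v) = z%:~R *: phi v.
Proof. by apply/matrixP=> i j; rewrite !mxE intrM. Qed.
Lemma phi_sum (I : Type) (r : seq I) (P : pred I) (F : I -> 'rV[int]_n) :
  phi (\sum_(i <- r | P i) F i) = \sum_(i <- r | P i) phi (F i).
Proof. exact: (big_morph phi phiD phi0). Qed.
Lemma phi_inj : injective phi.
Proof.
move=> u v /matrixP H; apply/matrixP=> i j; move: (H i j); rewrite !mxE.
exact: intr_inj.
Qed.
Lemma phi_natZ (k : nat) v : phi (k%:Z *: v) = k%:R *: phi v.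
Proof. by rewrite phiZ. Qed.

Definition QE (E : {set 'I_m}) (x : 'rV[rat]_n) : Prop :=
  exists c : 'I_m -> rat, x = \sum_(i in E) c i *: AQ A i.

Lemma QE0 E : QE E 0.
Proof. by exists (fun _ => 0); rewrite big1 // => i _; rewrite scale0r. Qed.
Lemma QED E u v : QE E u -> QE E v -> QE E (u + v).
Proof.
move=> [c1 ->] [c2 ->]; exists (fun i => c1 i + c2 i).
by rewrite -big_split; apply: eq_bigr => i _; rewrite scalerDl.
Qed.
Lemma QEZ E (q : rat) u : QE E u -> QE E (q *: u).
Proof.
move=> [c ->]; exists (fun i => q * c i).
by rewrite scaler_sumr; apply: eq_bigr => i _; rewrite scalerA.
Qed.
Lemma sigma_QE E x : sigmaE A E x -> QE E x.
Proof. by move=> [c [_ ->]]; exists c. Qed.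

Lemma ZA0 E : ZAset A E 0.
Proof. by exists (fun _ => 0); rewrite big1 // => i _; rewrite scale0r. Qed.
Lemma ZAD E u v : ZAset A E u -> ZAset A E v -> ZAset A E (u + v).
Proof.
move=> [c1 ->] [c2 ->]; exists (fun i => c1 i + c2 i).
by rewrite -big_split; apply: eq_bigr => i _; rewrite scalerDl.
Qed.
Lemma ZAZ E (q : int) u : ZAset A E u -> ZAset A E (q *: u).
Proof.
move=> [c ->]; exists (fun i => q * c i).
by rewrite scaler_sumr; apply: eq_bigr => i _; rewrite scalerA.
Qed.
Lemma ZA_QE E y : ZAset A E y -> QE E (phi y).
Proof.
move=> [c ->]; exists (fun i => (c i)%:~R).
by rewrite phi_sum; apply: eq_bigr => i _; rewrite phiZ.
Qed.

Lemma NA0 E : NAset A E 0.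
Proof. by exists (fun _ => 0%N); rewrite big1 // => i _; rewrite scale0r. Qed.
Lemma NAD E u v : NAset A E u -> NAset A E v -> NAset A E (u + v).
Proof.
move=> [c1 ->] [c2 ->]; exists (fun i => (c1 i + c2 i)%N).
by rewrite -big_split; apply: eq_bigr => i _; rewrite PoszD scalerDl.
Qed.
Lemma NAZ E (k : nat) u : NAset A E u -> NAset A E (k%:Z *: u).
Proof.
move=> [c ->]; exists (fun i => (k * c i)%N).
by rewrite scaler_sumr; apply: eq_bigr => i _; rewrite scalerA PoszM.
Qed.
Lemma NA_ZA E u : NAset A E u -> ZAset A E u.
Proof. by move=> [c ->]; exists (fun i => (c i)%:Z). Qed.

Lemma span_QE E x : spanQ (sigmaE A E) x <-> QE E x.
Proof.
split.
  move=> [k [v [c [Hv ->]]]].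
  apply: (big_ind (QE E)); first exact: QE0.
    by move=> ? ? ; apply: QED.
  by move=> j _; apply: QEZ; apply: sigma_QE.
move=> [c ->].
exists m, (fun i => if i \in E then AQ A i else 0), c; split.
  move=> j; case: ifP => jE.
    exists (fun i => if i == j then 1 else 0); split.
      by move=> i; case: ifP.
    rewrite (bigD1 j) //= ifT // scale1r big1 ?addr0 // => i /andP[_ /negbTE ->].
    by rewrite scale0r.
  by exists (fun _ => 0); split => //; rewrite big1 // => i _; rewrite scale0r.
rewrite big_mkcond /=; apply: eq_bigr => i _.
by case: ifP => _; rewrite ?scaler0.
Qed.

Lemma ZA_gen (E : {set 'I_m}) i : i \in E -> ZAset A E (A i).
Proof.
move=> iE; exists (fun j => if j == i then 1 else 0).
rewrite (bigD1 i) //= ifT // scale1r big1 ?addr0 // => j /andP[_ /negbTE ->].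
by rewrite scale0r.
Qed.
Lemma NA_gen (E : {set 'I_m}) i : i \in E -> NAset A E (A i).
Proof.
move=> iE; exists (fun j => if j == i then 1%N else 0%N).
rewrite (bigD1 i) //= ifT // scale1r big1 ?addr0 // => j /andP[_ /negbTE ->].
by rewrite scale0r.
Qed.

Definition cleared (S : 'rV[int]_n -> Prop) (x : 'rV[rat]_n) :=
  exists d : nat, (0 < d)%N /\ exists y, S y /\ phi y = d%:R *: x.

Lemma clear_den (S : 'rV[int]_n -> Prop) (E : {set 'I_m}) (F : 'I_m -> 'rV[rat]_n) :
  S 0 -> (forall u v, S u -> S v -> S (u + v)) ->
  (forall (k : nat) u, S u -> S (k%:Z *: u)) ->
  (forall i, i \in E -> cleared S (F i)) ->
  cleared S (\sum_(i in E) F i).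
Proof.
move=> S0 SD SZ HF; apply: (big_ind (cleared S)) => //.
  exists 1%N; split=> //; exists 0; split=> //; by rewrite phi0 scaler0.
move=> x1 x2 [d1 [d1p [y1 [Sy1 e1]]]] [d2 [d2p [y2 [Sy2 e2]]]].
exists (d1 * d2)%N; split; first by rewrite muln_gt0 d1p.
exists (d2%:Z *: y1 + d1%:Z *: y2); split; first by apply: SD; apply: SZ.
rewrite phiD !phi_natZ e1 e2 !scalerA scalerDr natrM [d2%:R * _]mulrC //.
Qed.

Lemma den_nat (c : rat) : ((`|denq c|%N)%:R : rat) = (denq c)%:~R.
Proof. by rewrite pmulrn abszE gtr0_norm // denq_gt0. Qed.

Lemma ZA_term (E : {set 'I_m}) i (c : rat) : i \in E -> cleared (ZAset A E) (c *: AQ A i).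
Proof.
move=> iE; exists `|denq c|%N; split; first by rewrite absz_gt0 gt_eqF // denq_gt0.
exists (numq c *: A i); split; first by apply: ZAZ; apply: ZA_gen.
by rewrite phiZ scalerA den_nat numqE mulrC.
Qed.

Lemma NA_term (E : {set 'I_m}) i (c : rat) : i \in E -> 0 <= c -> cleared (NAset A E) (c *: AQ A i).
Proof.
move=> iE c0; exists `|denq c|%N; split; first by rewrite absz_gt0 gt_eqF // denq_gt0.
exists ((`|numq c|%N)%:Z *: A i); split; first by apply: NAZ; apply: NA_gen.
by rewrite phiZ scalerA den_nat abszE ger0_norm ?numq_ge0 // numqE mulrC.
Qed.

Lemma QE_cleared E x : QE E x -> cleared (ZAset A E) x.
Proof.
move=> [c ->]; apply: clear_den; [exact: ZA0|exact: ZAD|by move=> k u; apply: ZAZ|].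
by move=> i iE; apply: ZA_term.
Qed.

Lemma sigma_cleared E x : sigmaE A E x -> cleared (NAset A E) x.
Proof.
move=> [c [c0 ->]]; apply: clear_den; [exact: NA0|exact: NAD|exact: NAZ|].
by move=> i iE; apply: NA_term.
Qed.

Lemma exists_min (P : nat -> Prop) :
  (exists k, P k) -> exists k, P k /\ forall k', (k' < k)%N -> ~ P k'.
Proof.
move=> [k Pk]; elim/ltn_ind: k Pk => k IH Pk.
case: (classic (exists k', (k' < k)%N /\ P k')) => [[k' [lt Pk']]|H].
  exact: IH k' lt Pk'.
by exists k; split=> // k' lt Pk'; apply: H; exists k'.
Qed.

Lemma cyclic_line (L : 'rV[int]_n -> Prop) (b : 'rV[int]_n) (j : 'I_n) :
  (forall u v, L u -> L v -> L (u + v)) -> (forall (z : int) u, L u -> L (z *: u)) ->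
  L b -> b ord0 j != 0 -> (forall x, L x -> x ord0 j = 0 -> x = 0) ->
  exists g, L g /\ forall x, L x <-> exists z : int, x = z *: g.
Proof.
move=> LD LZ Lb bj0 Hinj.
pose P k := (0 < k)%N /\ exists x, L x /\ x ord0 j = k%:Z.
have [k [[k0 [g [Lg gj]]] kmin]] : exists k, P k /\ forall k', (k' < k)%N -> ~ P k'.
  apply: exists_min; exists `|b ord0 j|%N; split; first by rewrite absz_gt0.
  exists ((sgz (b ord0 j)) *: b); split; first exact: LZ.
  by rewrite mxE abszEsg.
exists g; split=> // x; split; last by move=> [z ->]; apply: LZ.
move=> Lx.
have kn0 : (k%:Z) != 0 by rewrite eqz_nat -lt0n.
set q := ((x ord0 j) %/ k%:Z)%Z; set r := ((x ord0 j) %% k%:Z)%Z.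
have Ly : L (x + (- q) *: g) by apply: LD => //; apply: LZ.
have yj : (x + (- q) *: g) ord0 j = r.
  rewrite !mxE gj {1}(divz_eq (x ord0 j) k) -/q -/r.
  by rewrite mulNr [q * _ + r]addrC -addrA subrr addr0.
have r0 : r = 0.
  have rge : 0 <= r := modz_ge0 _ kn0.
  have rlt : r < k%:Z by have := ltz_mod (x ord0 j) kn0.
  case: (eqVneq r 0) => // rn0; exfalso.
  apply: (kmin `|r|%N); first by rewrite -ltz_nat abszE ger0_norm.
  split; first by rewrite absz_gt0.
  by exists (x + (-q) *: g); rewrite abszE ger0_norm.
exists q; have := Hinj _ Ly; rewrite yj r0 => /(_ erefl) /eqP.
by rewrite scaleNr subr_eq0 => /eqP.
Qed.

End Helpers.

Unset Implicit Arguments.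

Theorem proposition4p2 (m n : nat) (A : 'I_m -> 'rV[int]_n)
    (E1 E2 : {set 'I_m}) :
  is_affine_semigroup A ->
  E1 != set0 -> E2 != set0 ->
  E1 :&: E2 = set0 -> E1 :|: E2 = setT ->
  (s_gluing A E1 E2 <-> cone_direct_sum A E1 E2).
Proof.
move=> _ _ _ _ _; split.
  move=> [a [Ha [t [t0 [N1 N2]]]]].
  have tn0 : (t%:R : rat) != 0 by rewrite pnatr_eq0 -lt0n.
  have sig E : NAset A E (t%:Z *: a) -> sigmaE A E (phi a).
    move=> [c ec]; exists (fun i => (c i)%:R / t%:R); split.
      by move=> i; rewrite divr_ge0 ?ler0n.
    apply: (scalerI tn0); rewrite /= -phi_natZ ec phi_sum scaler_sumr.
    apply: eq_bigr => i _.
    by rewrite phiZ scalerA mulrCA divff // mulr1 pmulrn.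
  exists (phi a); split; first exact: sig.
  split; first exact: sig.
  move=> x; rewrite !span_QE; split.
    move=> [/QE_cleared [d1 [d1p [y1 [Z1 e1]]]] /QE_cleared [d2 [d2p [y2 [Z2 e2]]]]].
    have ey : d2%:Z *: y1 = d1%:Z *: y2.
      by apply: phi_inj; rewrite !phi_natZ e1 e2 !scalerA mulrC.
    have [z ez] : exists z, d2%:Z *: y1 = z *: a.
      by apply/Ha; split; [apply: ZAZ | rewrite ey; apply: ZAZ].
    exists (z%:~R / (d1 * d2)%N%:R).
    have dn0 : ((d1 * d2)%N%:R : rat) != 0.
      by rewrite pnatr_eq0 muln_eq0 negb_or -!lt0n d1p d2p.
    apply: (scalerI dn0); rewrite /= scalerA mulrCA divff // mulr1 -phiZ -ez.
    by rewrite phi_natZ e1 scalerA natrM mulrC.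
  have Za E : (forall x, (exists z : int, x = z *: a) -> ZAset A E x) -> QE A E (phi a).
    by move=> H; apply: ZA_QE; apply: H; exists 1; rewrite scale1r.
  move=> [q ->]; split; apply: QEZ; apply: Za => y /Ha [].
    by [].
  by [].
move=> [aQ [s1 [s2 Hsp]]].
have spans x : ZAset A E1 x -> ZAset A E2 x -> exists q, phi x = q *: aQ.
  move=> Z1 Z2; apply/Hsp; rewrite !span_QE; split; exact: ZA_QE.
case: (eqVneq aQ 0) => [a0 | an0].
  exists 0; split; last first.
    by exists 1%N; split=> //; rewrite scaler0; split; exact: NA0.
  move=> x; split.
    by move=> [z ->]; rewrite scaler0; split; exact: ZA0.
  move=> [Z1 Z2]; exists 0; rewrite scale0r; apply: phi_inj; rewrite phi0.
  by have [q ->] := spans x Z1 Z2; rewrite a0 scaler0.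
have [d1 [d1p [y1 [N1 e1]]]] := sigma_cleared s1.
have [d2 [d2p [y2 [N2 e2]]]] := sigma_cleared s2.
set b := d2%:Z *: y1.
have eb : b = d1%:Z *: y2.
  by apply: phi_inj; rewrite !phi_natZ e1 e2 !scalerA mulrC.
have NB1 : NAset A E1 b by apply: NAZ.
have NB2 : NAset A E2 b by rewrite eb; apply: NAZ.
have Dn0 : ((d1 * d2)%N%:R : rat) != 0.
  by rewrite pnatr_eq0 muln_eq0 negb_or -!lt0n d1p d2p.
have pb : phi b = (d1 * d2)%N%:R *: aQ.
  by rewrite phi_natZ e1 scalerA natrM mulrC.
have [j aj] : exists j, aQ ord0 j != 0.
  case: (pickP (fun j => aQ ord0 j != 0)) => [j Hj | H]; first by exists j.
  exfalso; move/eqP: an0; apply; apply/matrixP => i k; rewrite [i]ord1 mxE.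
  exact/eqP/negbFE/H.
have bj : b ord0 j != 0.
  have := congr1 (fun v : 'rV[rat]_n => v ord0 j) pb; rewrite /= !mxE => e.
  apply/eqP => b0; move: e; rewrite b0 => /esym/eqP.
  by rewrite mulf_eq0 (negbTE Dn0) (negbTE aj).
pose L x := ZAset A E1 x /\ ZAset A E2 x.
have Linj : forall x, L x -> x ord0 j = 0 -> x = 0.
  move=> x [Z1 Z2] xj; have [q eq] := spans x Z1 Z2.
  have := congr1 (fun v : 'rV[rat]_n => v ord0 j) eq; rewrite /= !mxE xj => /esym/eqP.
  rewrite mulf_eq0 (negbTE aj) orbF => /eqP q0.
  by apply: phi_inj; rewrite eq q0 scale0r phi0.
have LD : forall u v, L u -> L v -> L (u + v).
  by move=> u v [U1 U2] [V1 V2]; split; apply: ZAD.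
have LZ : forall (z : int) u, L u -> L (z *: u).
  by move=> z u [U1 U2]; split; apply: ZAZ.
have Lb : L b by split; apply: NA_ZA.
have [g [Lg Hg]] := cyclic_line LD LZ Lb bj Linj.
have [z ez] := (Hg b).1 Lb.
case: (ltgtP z 0) => [zneg|zpos|z0].
- exists (-g); split.
    move=> x; split.
      by move=> [z' ->]; apply/Hg; exists (-z'); rewrite scalerN scaleNr.
    by move=> /Hg [z' ->]; exists (-z'); rewrite scalerN scaleNr opprK.
  exists `|z|%N; split; first by rewrite absz_gt0 lt_eqF.
  by rewrite abszE ltr0_norm // scalerN scaleNr opprK -ez.
- exists g; split; first by move=> x; have := Hg x; tauto.
  exists `|z|%N; split; first by rewrite absz_gt0 gt_eqF.
  by rewrite abszE gtr0_norm // -ez.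
- by exfalso; move: bj; rewrite ez z0 scale0r mxE eqxx.
Qed.
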